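(* Let $n\ge 3$ and $k\ge 1$, and let $H\in\mathcal{H}_k$. Then \[ \Gamma_{\rm S}(C_n,H)=kn+\left\lceil \frac{n}{3}\right\rceil . \]
   Context: $C_n$ is the cycle on $n$ vertices; $\gamma$ is the domination number. For $k\ge 1$, $\mathcal{H}_k$ is the class of all finite graphs $H$ with the following two properties: (a) $\gamma(H)=k+1$ and $\gamma(H-v)=k$ for every vertex $v\in V(H)$; (b) for all $x,y\in V(H)$ (where $x=y$ is allowed) there exists a minimum dominating set of $H$ containing both $x$ and $y$. For graphs $G,H$ and a function $f\colon V(G)\to V(H)$, the Sierpiński product $G\otimes_f H$ is the graph with vertex set $V(G)\times V(H)$ and edges of two types: (type 1) $(g,h)(g,h')$ for every $g\in V(G)$ and every edge $hh'\in E(H)$; (type 2) $(g,f(g'))(g',f(g))$ for every edge $gg'\in E(G)$. $\Gamma_{\rm S}(G,H)=\max_{f}\gamma(G\otimes_f H)$ over all functions $f\colon V(G)\to V(H)$. *)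

(* Defs.v *)
From mathcomp Require Import all_boot.
Set Implicit Arguments. Unset Strict Implicit. Unset Printing Implicit Defensive.

Record sgraph := SGraph {
  vert : finType;
  adj : rel vert;
  adj_sym : symmetric adj;
  adj_irr : irreflexive adj }.

Definition dominating (G : sgraph) (D : {set vert G}) : bool :=
  [forall x, (x \in D) || [exists y in D, adj y x]].

(* domination number: minimum size of a dominating set (the whole vertex
   set is always dominating, so #|V| is a valid default). *)
Definition gamma (G : sgraph) : nat :=
  \big[minn/#|vert G|]_(D : {set vert G} | dominating D) #|D|.

Definition min_dom_set (G : sgraph) (D : {set vert G}) : bool :=
  dominating D && (#|D| == gamma G).

Definition del_type (G : sgraph) (v : vert G) : finType :=
  {x : vert G | x != v}.

Definition del_adj (G : sgraph) (v : vert G) : rel (del_type v) :=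
  fun x y => adj (val x) (val y).

Lemma del_adj_sym (G : sgraph) (v : vert G) : symmetric (@del_adj G v).
Proof. by move=> x y; rewrite /del_adj adj_sym. Qed.

Lemma del_adj_irr (G : sgraph) (v : vert G) : irreflexive (@del_adj G v).
Proof. by move=> x; rewrite /del_adj adj_irr. Qed.

Definition del_vertex (G : sgraph) (v : vert G) : sgraph :=
  SGraph (@del_adj_sym G v) (@del_adj_irr G v).

Definition in_Hk (k : nat) (H : sgraph) : Prop :=
  gamma H = k.+1 /\
  (forall v : vert H, gamma (del_vertex v) = k) /\
  (forall x y : vert H, exists D : {set vert H},
      min_dom_set D /\ x \in D /\ y \in D).

(* The cycle C_n on vertex set 'I_n (intended for n >= 3). *)
Definition cyc_adj (n : nat) : rel 'I_n :=
  fun i j => (j == (i.+1 %% n) :> nat) || (i == (j.+1 %% n) :> nat) .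

Definition cyc_adj' (n : nat) : rel 'I_n :=
  fun i j => (i != j) && cyc_adj i j.

Lemma cyc_adj'_sym n : symmetric (@cyc_adj' n).
Proof. by move=> i j; rewrite /cyc_adj' /cyc_adj eq_sym orbC. Qed.

Lemma cyc_adj'_irr n : irreflexive (@cyc_adj' n).
Proof. by move=> i; rewrite /cyc_adj' eqxx. Qed.

Definition cycle_graph (n : nat) : sgraph :=
  SGraph (@cyc_adj'_sym n) (@cyc_adj'_irr n).

Definition sp_adj (G H : sgraph) (f : vert G -> vert H)
  : rel (vert G * vert H)%type :=
  fun p q =>
    ((p.1 == q.1) && adj p.2 q.2) ||
    (adj p.1 q.1 && (p.2 == f q.1) && (q.2 == f p.1)).

Lemma sp_adj_sym G H f : symmetric (@sp_adj G H f).
Proof.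
move=> p q; rewrite /sp_adj eq_sym (adj_sym p.2) (adj_sym p.1); congr orb.
by case: (adj q.1 p.1); case: (q.2 == f p.1); case: (p.2 == f q.1).
Qed.

Lemma sp_adj_irr G H f : irreflexive (@sp_adj G H f).
Proof. by move=> p; rewrite /sp_adj !adj_irr andbF. Qed.

Definition sierpinski (G H : sgraph) (f : vert G -> vert H) : sgraph :=
  SGraph (@sp_adj_sym G H f) (@sp_adj_irr G H f).

Definition GammaS (G H : sgraph) : nat :=
  \max_(f : {ffun vert G -> vert H}) gamma (sierpinski (fun g => f g)).

(* Main.v *)
Require Import Defs.
From mathcomp Require Import all_boot zify.
Set Implicit Arguments. Unset Strict Implicit. Unset Printing Implicit Defensive.

Lemma dom_setT (G : sgraph) : dominating [set: vert G].
Proof. by apply/forallP => x; rewrite inE. Qed.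

Lemma gamma_le (G : sgraph) (D : {set vert G}) : dominating D -> gamma G <= #|D|.
Proof.
move=> hD; rewrite /gamma.
have : D \in index_enum {set vert G} by rewrite mem_index_enum.
elim: (index_enum _) => [//|a r IH]; rewrite inE big_cons => /orP [/eqP <-|/IH h].
- by rewrite hD geq_minl.
- by case: ifP => _ //; rewrite geq_min h orbT.
Qed.

Lemma gamma_ge (G : sgraph) m :
  (forall D : {set vert G}, dominating D -> m <= #|D|) -> m <= gamma G.
Proof.
move=> h; rewrite /gamma; apply: (big_ind (fun x => m <= x)).
- by rewrite -cardsT; apply: h; apply: dom_setT.
- by move=> x y hx hy; rewrite leq_min hx hy.
- by move=> D hD; apply: h.
Qed.

Lemma gamma_ex (G : sgraph) : exists2 D : {set vert G}, dominating D & #|D| = gamma G.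
Proof.
rewrite /gamma; apply: (big_ind (fun x => exists2 D : {set vert G}, dominating D & #|D| = x)).
- by exists setT; [apply: dom_setT | rewrite cardsT].
- move=> x y [D1 h1 e1] [D2 h2 e2]; rewrite /minn; case: ltnP => _.
  + by exists D1. + by exists D2.
- by move=> D hD; exists D.
Qed.

Lemma gamma_le_card (G : sgraph) : gamma G <= #|vert G|.
Proof. by rewrite -cardsT; apply: gamma_le; apply: dom_setT. Qed.

Lemma card_pairs (A B : finType) (D : {set (A * B)%type}) :
  #|D| = \sum_a #|[set b | (a, b) \in D]|.
Proof.
rewrite -sum1_card big_mkcond /=.
rewrite (eq_bigr (fun p => (fun a b => if (a, b) \in D then 1 else 0) p.1 p.2)); last by case.
rewrite -(pair_bigA _ (fun a b => if (a, b) \in D then 1 else 0)) /=.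
apply: eq_bigr => a _; rewrite -sum1_card [RHS]big_mkcond /=.
by apply: eq_bigr => b _; rewrite inE.

Qed.

Lemma sum_dvd3 n : \sum_(i < n) (3 %| i) = (n + 2) %/ 3.
Proof.
elim: n => [|n IH]; first by rewrite big_ord0.
rewrite big_ord_recr /= IH. lia.
Qed.

Lemma modS i n : i < n -> i.+1 %% n = if i.+1 == n then 0 else i.+1.
Proof.
move=> h; case: eqP => [->|ne]; first by rewrite modnn.
by rewrite modn_small //; lia.
Qed.

Section Cyc.
Variable m : nat.
Local Notation N := m.+1.
Definition csucc (g : 'I_N) : 'I_N := inord (if g.+1 == N then 0 else g.+1).
Definition cpred (g : 'I_N) : 'I_N := inord (if g == 0 :> nat then m else g.-1).
Definition cnb (g : 'I_N) : 'I_N :=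
  inord (if g %% 3 == 1 then g.-1 else if g.+1 < N then g.+1 else 0).

Lemma csuccE g : val (csucc g) = if g.+1 == N then 0 else g.+1.
Proof. have hg := ltn_ord g; rewrite /csucc /= inordK //; case: eqP; lia. Qed.
Lemma cpredE g : val (cpred g) = if g == 0 :> nat then m else g.-1.
Proof. have hg := ltn_ord g; rewrite /cpred /= inordK //; case: eqP; lia. Qed.
Lemma cnbE g : val (cnb g) = if g %% 3 == 1 then g.-1 else if g.+1 < N then g.+1 else 0.
Proof. have hg := ltn_ord g; rewrite /cnb /= inordK //; repeat case: ifP => ?; lia. Qed.

Lemma cadjE (i j : 'I_N) : cyc_adj' i j =
  (val i != val j) && ((val j == if i.+1 == N then 0 else i.+1) ||
                       (val i == if j.+1 == N then 0 else j.+1)).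
Proof. by rewrite /cyc_adj' /cyc_adj !modS. Qed.

Hypothesis hm : 2 <= m.

Lemma cnb_prop (g : 'I_N) : ~~ (3 %| g) ->
  [/\ 3 %| cnb g, cyc_adj' (cnb g) g & (g == cpred (cnb g)) || (g == csucc (cnb g))].
Proof.
move=> h3; have := ltn_ord g; move: h3.
rewrite cadjE -!val_eqE /= cpredE csuccE cnbE.
case: (g %% 3 =P 1) => e1; case: (ltnP g.+1 N) => e2;
  do ! [case: eqP => /=]; intros; first [ by split; lia | exfalso; lia].
Qed.

Lemma cadj_nb (t x : 'I_N) : cyc_adj' t x -> (x == csucc t) || (x == cpred t).
Proof.
have := ltn_ord t; have := ltn_ord x.
rewrite cadjE -!val_eqE /= cpredE csuccE.
do ! [case: eqP => /=]; lia.
Qed.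
End Cyc.

Section Upper.
Variables (m k : nat) (H : sgraph).
Hypothesis hm : 2 <= m.
Hypothesis hH : in_Hk k H.
Local Notation N := m.+1.
Variable f : 'I_N -> vert H.

Definition Aup (g : 'I_N) : {set vert H} :=
  if 3 %| g then odflt set0 [pick D | min_dom_set D && (f (cpred g) \in D) && (f (csucc g) \in D)]
  else [set val x | x in odflt set0 [pick D : {set del_type (f (cnb g))} | @dominating (del_vertex (f (cnb g))) D && (#|D| == k)]].

Lemma Aup1 (g : 'I_N) : 3 %| g ->
  [/\ dominating (Aup g), #|Aup g| = k.+1, f (cpred g) \in Aup g & f (csucc g) \in Aup g].
Proof.
move=> h; rewrite /Aup h; case: pickP => [D /andP [/andP [/andP [hd /eqP hc] h1] h2]|] /=.
  by split => //; rewrite hc; case: hH.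
case: hH => _ [_ hex]; have [D [hD [h1 h2]]] := hex (f (cpred g)) (f (csucc g)).
by move=> /(_ D); rewrite hD h1 h2.
Qed.

Lemma Aup2 (g : 'I_N) : ~~ (3 %| g) ->
  #|Aup g| = k /\ forall h, h != f (cnb g) -> (h \in Aup g) || [exists y in Aup g, adj y h].
Proof.
move=> h; rewrite /Aup (negbTE h); case: pickP => [D /andP [hd /eqP hc]|] /=.
  split; first by rewrite card_imset //; exact: val_inj.
  move=> x hx; move/forallP: hd => /(_ (exist _ x hx)) /orP [hin|/existsP [y /andP [hy ha]]].
    by rewrite (imset_f val hin).
  apply/orP; right; apply/existsP; exists (val y); rewrite (imset_f val hy) /=.
  exact: ha.
case: hH => _ [hdel _]; have [D hD hc] := gamma_ex (del_vertex (f (cnb g))).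
by move=> /(_ D); rewrite hD hc hdel eqxx.
Qed.

Lemma upper : gamma (sierpinski (G := cycle_graph N) f) <= k * N + (N + 2) %/ 3.
Proof.
pose D : {set vert (sierpinski (G := cycle_graph N) f)} := [set p | p.2 \in Aup p.1].
have -> : k * N + (N + 2) %/ 3 = #|D|.
  rewrite card_pairs (eq_bigr (fun g : 'I_N => k + (3 %| g))).
    by rewrite big_split /= sum_nat_const card_ord sum_dvd3 mulnC.
  move=> g _; rewrite (_ : [set b | (g, b) \in D] = Aup g); last by apply/setP => b; rewrite !inE.
  case h3: (3 %| g); first by case: (Aup1 h3) => _ -> _ _; rewrite addn1.
  by case: (Aup2 (negbT h3)) => -> _; rewrite addn0.
apply: gamma_le; apply/forallP => [[g h]]; rewrite inE /=.
case h3: (3 %| g).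
  case: (Aup1 h3) => /forallP /(_ h) /orP [->//|/existsP [y /andP [hy ha]]] _ _ _.
  apply/orP; right; apply/existsP; exists (g, y); rewrite inE hy /= /sp_adj /= eqxx ha.
  done.
case: (Aup2 (negbT h3)) => _ hdom.
case: (cnb_prop hm (negbT h3)) => hs hadj hps.
case: (eqVneq h (f (cnb g))) => [->|hne].
  apply/orP; right; apply/existsP; exists (cnb g, f g); rewrite inE /=.
  rewrite /sp_adj /= hadj !eqxx /= orbT andbT.
  case: (Aup1 hs) => _ _ h1 h2.
  by case/orP: hps => /eqP {1}->.
case/orP: (hdom h hne) => [->//|/existsP [y /andP [hy ha]]].
apply/orP; right; apply/existsP; exists (g, y); rewrite inE hy /= /sp_adj /= eqxx ha.
done.
Qed.
End Upper.

Lemma cyc_dom_card m (hm : 2 <= m) (T : {set 'I_m.+1}) : @dominating (cycle_graph m.+1) T ->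
  m.+1 <= 3 * #|T|.
Proof.
move=> /forallP hT.
pose Nb (t : 'I_m.+1) : {set 'I_m.+1} := [set t; csucc t; cpred t].
have hNb t : #|Nb t| <= 3.
  rewrite /Nb; apply: (leq_trans (leq_card_setU _ _)); rewrite cards1 addn1 ltnS cardsU1 cards1; by case: (_ \notin _).
apply: (@leq_trans (\sum_(x : 'I_m.+1) 1)); first by rewrite sum1_card card_ord.
apply: (@leq_trans (\sum_(x : 'I_m.+1) \sum_(t in T) (x \in Nb t))).
  apply: leq_sum => x _.
  have [t ht hx] : exists2 t, t \in T & x \in Nb t.
    case/orP: (hT x) => [hx|/existsP [t /andP [ht ha]]].
      by exists x => //; rewrite !inE eqxx.
    exists t => //; case/orP: (cadj_nb hm ha) => /eqP ->; rewrite !inE eqxx ?orbT //.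
  by rewrite (bigD1 t) //= hx.
rewrite exchange_big /= mulnC -sum_nat_const.
apply: leq_sum => t _; apply: leq_trans (hNb t).
rewrite -sum1_card [X in _ <= X]big_mkcond /=.
by apply: leq_sum => x _; case: (x \in Nb t).
Qed.

Section Lower.
Variables (m k : nat) (H : sgraph).
Hypothesis hm : 2 <= m.
Hypothesis hH : in_Hk k H.
Local Notation N := m.+1.
Variable v : vert H.
Variable f : 'I_N -> vert H.
Hypothesis hf : forall g, f g = v.

Lemma domH_big (S : {set vert H}) : dominating S -> k < #|S|.
Proof. by move=> hS; case: hH => <- _; apply: gamma_le. Qed.

Lemma lower : k * N + (N + 2) %/ 3 <= gamma (sierpinski (G := cycle_graph N) f).
Proof.
apply: gamma_ge => D /forallP hD.
pose Dg (g : 'I_N) : {set vert H} := [set h | (g, h) \in D].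
have L1 g h : h != v -> (h \in Dg g) || [exists y in Dg g, adj y h].
  move=> hv; case/orP: (hD (g, h)) => [hin|/existsP [[g' y] /andP [hy]]].
    by rewrite inE hin.
  rewrite /= /sp_adj /= hf => /orP [/andP [/eqP eg ha]|/andP [/andP [_ _] /eqP e]].
    by apply/orP; right; apply/existsP; exists y; rewrite inE -eg hy ha.
  by rewrite e hf eqxx in hv.
have L2 g : v \in Dg g -> k < #|Dg g|.
  move=> hvg; apply: domH_big; apply/forallP => h.
  case: (eqVneq h v) => [->|hv]; first by rewrite hvg.
  exact: L1.
have L3 g : k <= #|Dg g|.
  case hvg: (v \in Dg g); first by apply: ltnW; apply: L2.
  case: hH => _ [hdel _]; rewrite -(hdel v).
  pose D' : {set del_type v} := [set x | val x \in Dg g].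
  apply: (@leq_trans #|D'|).
    apply: gamma_le; apply/forallP => x.
    case/orP: (L1 g (val x) (valP x)) => [hx|/existsP [y /andP [hy ha]]].
      by rewrite inE hx.
    have yv : y != v by apply: contraNneq (negbT hvg) => <-.
    apply/orP; right; apply/existsP; exists (exist _ y yv); rewrite inE hy.
    exact: ha.
  rewrite -(card_imset _ val_inj); apply: subset_leq_card.
  by apply/subsetP => h /imsetP [x]; rewrite inE => hx ->.
have L4 g : #|Dg g| <= k -> exists2 g', cyc_adj' g' g & v \in Dg g'.
  move=> hc.
  have hvg : v \notin Dg g by apply: contraL hc => /L2; rewrite ltnNge.
  case/orP: (hD (g, v)) => [hin|/existsP [[g' y] /andP [hy]]].
    by move: hvg; rewrite inE hin.
  rewrite /= /sp_adj /= !hf => /orP [/andP [/eqP eg ha]|/andP [/andP [ha /eqP ey] _]].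
    exfalso; have : k < #|Dg g|.
      apply: domH_big; apply/forallP => h.
      case: (eqVneq h v) => [->|hv]; last exact: L1.
      by apply/orP; right; apply/existsP; exists y; rewrite inE -eg hy ha.
    by rewrite ltnNge hc.
  by exists g' => //; rewrite inE -ey.
pose T : {set 'I_N} := [set g | k < #|Dg g|].
have hT : @dominating (cycle_graph N) T.
  apply/forallP => g; rewrite inE; case: ltnP => //= hc.
  have [g' ha hv] := L4 g hc.
  by apply/existsP; exists g'; rewrite inE (L2 _ hv) ha.
have hTc := cyc_dom_card hm hT.
apply: (@leq_trans (k * N + #|T|)).
  by rewrite leq_add2l; lia.
rewrite card_pairs.
apply: (@leq_trans (\sum_(g : 'I_N) (k + (g \in T)))).
  rewrite big_split /= sum_nat_const card_ord mulnC leq_add2l.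
  by rewrite -sum1_card [X in X <= _]big_mkcond /=; apply: leq_sum => g _; case: (g \in T).
apply: leq_sum => g _; rewrite inE.
case: ltnP => hc /=; first by rewrite addn1.
by rewrite addn0; apply: L3.
Qed.
End Lower.

Theorem theorem3p5 (n k : nat) (H : sgraph) :
  3 <= n -> 1 <= k -> in_Hk k H ->
  GammaS (cycle_graph n) H = k * n + (n + 2) %/ 3.
Proof.
case: n => [//|m] hn _ hH.
have hm : 2 <= m by [].
apply/eqP; rewrite eqn_leq; apply/andP; split.
  apply/bigmax_leqP => f _; exact: upper.
have [v _] : exists v : vert H, v \in predT.
  apply/card_gt0P; case: hH => hg _; have := gamma_le_card H; rewrite hg.
  by apply: leq_trans.
apply: leq_trans (leq_bigmax [ffun _ : 'I_m.+1 => v]).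
by apply: lower => // g; rewrite ffunE.
Qed.
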